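(* Let $r \geq 2$ and let $1 \leq t \leq k_1 \leq k_2 \leq \cdots \leq k_r$ be integers. There exists $n_0(k_{r-1},k_r,t)$, depending only on $k_{r-1}, k_r, t$, such that the following holds for all integers $n \geq n_0(k_{r-1},k_r,t)$ (with $k_r \leq n$). Let $\mathcal{F}_1, \mathcal{F}_2, \dots, \mathcal{F}_r$ be families of subsets of $[n]=\{1,\dots,n\}$ such that every member of $\mathcal{F}_i$ has size at most $k_i$, for each $i$. Suppose that for all $i, j \in \{1,\dots,r\}$, every $A \in \mathcal{F}_i$ and $B \in \mathcal{F}_j$ with $|A \cap B| < t$ satisfy $|A \triangle B| \leq \min\{k_i,k_j\} - t$. Then $$\prod_{i=1}^r |\mathcal{F}_i| \leq \prod_{i=1}^r \left( \sum_{j=0}^{k_i - t} \binom{n-t}{k_i - t - j} \right).$$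
   Context: $A \triangle B$ denotes the symmetric difference $(A\setminus B)\cup(B\setminus A)$. *)

(* Defs.v *)
From mathcomp Require Import all_boot.
Set Implicit Arguments. Unset Strict Implicit. Unset Printing Implicit Defensive.

Definition symdiff (T : finType) (A B : {set T}) : {set T} :=
  (A :\: B) :|: (B :\: A).

(* Main.v *)
Require Import Defs.
From mathcomp Require Import all_boot.
From mathcomp Require Import zify.
Set Implicit Arguments. Unset Strict Implicit. Unset Printing Implicit Defensive.

Lemma card_bigcup_leq (I T : finType) (P : pred I) (F : I -> {set T}) :
  #|\bigcup_(i | P i) F i| <= \sum_(i | P i) #|F i|.
Proof.
elim/big_rec2: _ => [|i U n _ IH]; first by rewrite cards0.
rewrite cardsU; apply: leq_trans (leq_subr _ _) _.
exact: leq_add.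
Qed.

Lemma ffact_le_exp n j : n ^_ j <= n ^ j.
Proof.
elim: j n => [|j IH] n; first by rewrite ffactn0 expn0.
rewrite ffactnS expnS leq_mul2l; apply/orP; right.
apply: leq_trans (IH _) _.
case: j {IH} => [|j]; first by rewrite !expn0.
by rewrite leq_exp2r // leq_pred.
Qed.

Lemma bin_le_exp n j : 'C(n, j) <= n ^ j.
Proof.
apply: leq_trans (ffact_le_exp n j); rewrite -bin_ffact leq_pmulr //.
exact: fact_gt0.
Qed.

Lemma ffact_ge n m : (n.+1 - m) ^ m <= n ^_ m.
Proof.
elim: m n => [|m IH] n; first by rewrite ffactn0 expn0.
case: n => [|n]; first by rewrite subSS sub0n exp0n.
rewrite ffactSS expnS subSS.
apply: leq_mul; first exact: leq_subr.
exact: IH.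
Qed.

Lemma card_symdiff (T : finType) (A B : {set T}) :
  #|symdiff A B| = #|A :\: B| + #|B :\: A|.
Proof.
rewrite /symdiff cardsU.
have -> : (A :\: B) :&: (B :\: A) = set0.
  by apply/setP => x; rewrite !inE; case: (x \in A); case: (x \in B).
by rewrite cards0 subn0.
Qed.

Lemma CL (T : finType) (G : {set {set T}}) (A0 : {set T}) s d :
  0 < #|T| ->
  (forall B, B \in G -> #|B| = s /\ s - #|B :&: A0| <= d) ->
  #|G| <= 2 ^ #|A0| * #|T| ^ d.
Proof.
move=> NT HG.
have sub : G \subset \bigcup_(S in powerset A0) [set B in G | B :&: A0 == S].
  apply/subsetP=> B BG; apply/bigcupP; exists (B :&: A0).
    by rewrite powersetE subsetIr.
  by rewrite inE BG eqxx.
apply: leq_trans (subset_leq_card sub) _.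
apply: leq_trans (card_bigcup_leq _ _) _.
rewrite -card_powerset -sum_nat_const.
apply: leq_sum => S _.
set GS := [set B in G | B :&: A0 == S].
case: (set_0Vmem GS) => [->|[B0 B0in]]; first by rewrite cards0.
have hd : s - #|S| <= d.
  move: B0in; rewrite inE => /andP[/HG [_ h] /eqP e]; by rewrite -e.
have inj : {in GS &, injective (fun B => B :\: A0)}.
  move=> B1 B2; rewrite !inE => /andP[_ /eqP e1] /andP[_ /eqP e2] eD.
  by rewrite -(setID B1 A0) -(setID B2 A0) e1 e2 eD.
rewrite -(card_in_imset inj).
apply: (@leq_trans #|[set D : {set T} | #|D| == s - #|S|]|).
  apply: subset_leq_card; apply/subsetP=> D /imsetP[B Bin ->]; rewrite inE.
  move: Bin; rewrite inE => /andP[/HG [hB _] /eqP e].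
  by rewrite cardsD e hB.
rewrite card_draws; apply: leq_trans (bin_le_exp _ _) _.
exact: leq_pexp2l.
Qed.

Lemma star_card (T : finType) (F : {set {set T}}) (S : {set T}) k :
  (forall C, C \in F -> S \subset C /\ #|C| <= k) ->
  #|F| <= \sum_(j < (k - #|S|).+1) 'C(#|T| - #|S|, j).
Proof.
move=> HF.
have inj : {in F &, injective (fun C => C :\: S)}.
  move=> C1 C2 /HF [s1 _] /HF [s2 _] eD.
  by rewrite -(setID C1 S) -(setID C2 S) (setIidPr s1) (setIidPr s2) eD.
rewrite -(card_in_imset inj).
have sub : [set C :\: S | C in F] \subset
   \bigcup_(j < (k - #|S|).+1) [set D : {set T} | D \subset ~: S & #|D| == j].
  apply/subsetP=> D /imsetP[C /HF [sC kC] ->].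
  have hj : #|C :\: S| < (k - #|S|).+1.
    rewrite ltnS cardsDS //; exact: leq_sub2r.
  apply/bigcupP; exists (Ordinal hj) => //.
  by rewrite inE /= eqxx andbT setDE subsetIr.
apply: leq_trans (subset_leq_card sub) _.
apply: leq_trans (card_bigcup_leq _ _) _.
apply: leq_sum => j _.
by rewrite cards_draws cardsCs setCK leqnn.
Qed.

Definition c0 K := K.+1 * (2 ^ K * (K * 2 ^ K.+1)).
Definition g K := 2 * K + c0 K * (K`! * 2 ^ K).

Lemma numeric N t m K : 1 <= m -> t + m <= K -> g K <= N ->
  c0 K * N ^ m.-1 <= 'C(N - t, m).
Proof.
move=> m1 tmK gN.
have hN1 : 2 * K <= N by apply: leq_trans gN; rewrite /g leq_addr.
have hN2 : c0 K * (K`! * 2 ^ K) <= N by apply: leq_trans gN; rewrite /g leq_addl.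
have h1 : (N.+1 - (t + m)) ^ m <= 'C(N - t, m) * m`!.
  rewrite bin_ffact; have := ffact_ge (N - t) m.
  by have -> : (N - t).+1 - m = N.+1 - (t + m) by lia.
have h2 : N ^ m <= 2 ^ m * (N.+1 - (t + m)) ^ m.
  rewrite -expnMn leq_exp2r //; lia.
have h3 : N ^ m = N * N ^ m.-1 by rewrite -expnS prednK.
have pos : 0 < 2 ^ m * m`! by rewrite muln_gt0 expn_gt0 fact_gt0.
rewrite -(leq_pmul2r pos).
apply: (@leq_trans (c0 K * N ^ m.-1 * (K`! * 2 ^ K))).
  rewrite leq_mul2l; apply/orP; right; rewrite mulnC.
  apply: leq_mul; first by apply: leq_fact; lia.
  by apply: leq_pexp2l => //; lia.
rewrite mulnAC; apply: (@leq_trans (N * N ^ m.-1)); first exact: leq_mul.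
rewrite -h3; apply: leq_trans h2 _.
rewrite mulnA (mulnC _ (2 ^ m)) -mulnA leq_mul2l h1 orbT //.
Qed.

Lemma single (T : finType) (F : {set {set T}}) t k K :
  1 <= t <= k -> k <= K -> g K <= #|T| ->
  (forall A, A \in F -> #|A| <= k) ->
  (forall A B, A \in F -> B \in F -> #|A :&: B| < t -> #|symdiff A B| <= k - t) ->
  #|F| <= \sum_(0 <= j < (k - t).+1) 'C(#|T| - t, k - t - j).
Proof.
move=> /andP[t1 tk] kK gN Hsz Hsd.
have sumE : \sum_(0 <= j < (k - t).+1) 'C(#|T| - t, k - t - j)
          = \sum_(j < (k - t).+1) 'C(#|T| - t, j).
  rewrite big_nat_rev /= -(big_mkord xpredT); apply: eq_big_nat => j /andP[_ hj].
  congr 'C(_, _); lia.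
rewrite sumE.
have Cle : 'C(#|T| - t, k - t) <= \sum_(j < (k - t).+1) 'C(#|T| - t, j).
  by rewrite big_ord_recr /= leq_addl.
case: (posnP (k - t)) => [m0|m1].
  rewrite m0 big_ord1 bin0.
  apply/card_le1_eqP => A B AF BF.
  case: (ltnP #|A :&: B| t) => h.
    have := Hsd A B AF BF h; rewrite m0 leqn0 cards_eq0 /symdiff setU_eq0 !setD_eq0.
    by move=> /andP[ab ba]; apply/eqP; rewrite eqEsubset ab ba.
  have hA := Hsz A AF; have hB := Hsz B BF.
  have e1 : A :&: B == A.
    rewrite eqEcard subsetIl /=; lia.
  have e2 : B :&: A == B.
    rewrite eqEcard subsetIl /= setIC; lia.
  move/eqP/setIidPl: e1 => ab; move/eqP/setIidPl: e2 => ba.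
  by apply/eqP; rewrite eqEsubset ab ba.
case: (boolP [exists S : {set T}, (#|S| == t) && [forall C in F, S \subset C]]).
  move=> /existsP [S /andP[/eqP St /forall_inP HS]].
  have := star_card (F:=F) (S:=S) (k:=k).
  by rewrite St; apply => C CF; split; [exact: HS | exact: Hsz].
move=> nstar.
have HC : forall S : {set T}, #|S| = t -> exists2 C, C \in F & ~~ (S \subset C).
  move=> S St; move/existsPn: nstar => /(_ S); rewrite St eqxx /=.
  by move=> /forall_inPn [C CF nS]; exists C.
apply: leq_trans Cle.
apply: leq_trans (numeric (t := t) m1 _ gN); last by lia.
set X := #|T| ^ (k - t).-1.
have N0 : 0 < #|T|.
  have : 2 * K <= g K by rewrite /g leq_addr.
  lia.
have K1 : 1 <= K by lia.
have inter : forall B C, B \in F -> #|B| = k -> C \in F -> t <= #|B :&: C|.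
  move=> B C BF Bk CF; rewrite leqNgt; apply/negP => h.
  have := Hsd B C BF CF h.
  have := subset_leq_card (subsetUl (B :\: C) (C :\: B)).
  rewrite /symdiff cardsD Bk; lia.
have lay : forall s, s < k.+1 ->
    #|[set B in F | #|B| == s]| <= 2 ^ K * (K * (2 ^ K.+1 * X)).
  move=> s hs.
  have [slt|->] : s < k \/ s = k by lia.
    set Fs := [set B in F | #|B| == s].
    case: (set_0Vmem Fs) => [->|[A0 A0in]]; first by rewrite cards0.
    move: (A0in); rewrite inE => /andP[A0F /eqP A0s].
    apply: leq_trans (CL (G:=Fs) (A0:=A0) (s:=s) (d:=(k - t).-1) N0 _) _.
      move=> B; rewrite inE => /andP[BF /eqP Bs]; split => //.
      case: (ltnP #|B :&: A0| t) => h; last by lia.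
      have := Hsd B A0 BF A0F h; rewrite card_symdiff !cardsD Bs A0s.
      have -> : #|A0 :&: B| = #|B :&: A0| by rewrite setIC.
      lia.
    apply: leq_mul; first by apply: leq_pexp2l => //; lia.
    rewrite mulnA; apply: leq_pmull; rewrite muln_gt0 expn_gt0 /=; lia.
  set Fs := [set B in F | #|B| == k].
  case: (set_0Vmem Fs) => [->|[A0 A0in]]; first by rewrite cards0.
  move: (A0in); rewrite inE => /andP[A0F /eqP A0s].
  set Ss := [set S : {set T} | S \subset A0 & #|S| == t].
  have sub : Fs \subset \bigcup_(S in Ss) [set B in Fs | S \subset B].
    apply/subsetP => B BFs; move: (BFs); rewrite inE => /andP[BF /eqP Bk].
    have hi := inter B A0 BF Bk A0F.
    have /card_gt0P [S] : 0 < #|[set S : {set T} | S \subset B :&: A0 & #|S| == t]|.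
      by rewrite cards_draws bin_gt0.
    rewrite inE subsetI => /andP[/andP[SB SA] St].
    apply/bigcupP; exists S; first by rewrite inE SA St.
    by rewrite inE BFs SB.
  apply: leq_trans (subset_leq_card sub) _.
  apply: leq_trans (card_bigcup_leq _ _) _.
  apply: (@leq_trans (\sum_(S in Ss) K * (2 ^ K.+1 * X))).
    apply: leq_sum => S; rewrite inE => /andP[SA /eqP St].
    have [C CF nSC] := HC S St.
    have sub2 : [set B in Fs | S \subset B] \subset
        \bigcup_(x in C :\: S) [set B in Fs | x |: S \subset B].
      apply/subsetP => B; rewrite inE => /andP[BFs SB].
      move: (BFs); rewrite inE => /andP[BF /eqP Bk].
      case: (boolP (B :&: C \subset S)) => [sBC|/subsetPn [x xBC xS]].
        exfalso.
        have h1 := inter B C BF Bk CF.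
        have h2 : #|B :&: C| <= #|S :&: C|.
          by apply: subset_leq_card; rewrite subsetI sBC subsetIr.
        have h3 : #|S :&: C| < #|S|.
          apply: proper_card; rewrite properEneq subsetIl andbT.
          by apply/eqP => /setIidPl; apply/negP.
        by have := leq_ltn_trans (leq_trans h1 h2) h3; rewrite St ltnn.
      move: xBC; rewrite inE => /andP[xB xC].
      apply/bigcupP; exists x; first by rewrite inE xS xC.
      by rewrite inE BFs subUset sub1set xB SB.
    apply: leq_trans (subset_leq_card sub2) _.
    apply: leq_trans (card_bigcup_leq _ _) _.
    apply: (@leq_trans (\sum_(x in C :\: S) 2 ^ K.+1 * X)).
      apply: leq_sum => x; rewrite inE => /andP[xS xC].
      pose G2 := [set B in Fs | x |: S \subset B].
      pose A2 := x |: S.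
      have hCL := @CL T G2 A2 k (k - t).-1 N0.
      apply: (leq_trans (hCL _)).
        move=> B; rewrite !inE => /andP[/andP[BF /eqP Bk] xSB]; split => //.
        rewrite /A2 (setIidPr xSB) cardsU1 xS St.
        have -> : true + t = t.+1 by [].
        by rewrite subnS.
      rewrite leq_mul2r; apply/orP; right; apply: leq_pexp2l => //.
      by rewrite cardsU1 xS St /= add1n ltnS (leq_trans tk kK).
    rewrite sum_nat_const leq_mul2r; apply/orP; right.
    apply: leq_trans (subset_leq_card (subsetDl C S)) _.
    exact: leq_trans (Hsz C CF) kK.
  rewrite sum_nat_const leq_mul2r; apply/orP; right.
  apply: (@leq_trans #|powerset A0|).
    by apply: subset_leq_card; apply/subsetP => S; rewrite inE powersetE => /andP[].
  by rewrite card_powerset A0s; apply: leq_pexp2l.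
have subF : F \subset \bigcup_(s < k.+1) [set B in F | #|B| == s].
  apply/subsetP => B BF; have hB := Hsz B BF.
  have hs : #|B| < k.+1 by rewrite ltnS.
  by apply/bigcupP; exists (Ordinal hs) => //; rewrite inE BF eqxx.
apply: leq_trans (subset_leq_card subF) _.
apply: leq_trans (card_bigcup_leq _ _) _.
apply: (@leq_trans (\sum_(s < k.+1) 2 ^ K * (K * (2 ^ K.+1 * X)))).
  by apply: leq_sum => s _; apply: lay.
rewrite sum_nat_const card_ord /c0 !mulnA.
rewrite !leq_mul2r; apply/orP; right; lia.
Qed.

Theorem theorem1p4 :
  forall t K1 K2 : nat,
  exists n0 : nat,
  forall (r : nat) (k : nat -> nat),
    2 <= r ->
    (forall i, 1 <= i < r -> k i <= k i.+1) ->
    1 <= t <= k 1 ->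
    k r.-1 = K1 -> k r = K2 ->
  forall n : nat, n0 <= n -> k r <= n ->
  forall F : nat -> {set {set 'I_n}},
    (forall i, 1 <= i <= r -> forall A, A \in F i -> #|A| <= k i) ->
    (forall i j, 1 <= i <= r -> 1 <= j <= r ->
       forall A B, A \in F i -> B \in F j ->
         #|A :&: B| < t -> #|symdiff A B| <= minn (k i) (k j) - t) ->
    \prod_(1 <= i < r.+1) #|F i|
      <= \prod_(1 <= i < r.+1)
           \sum_(0 <= j < (k i - t).+1) 'C(n - t, k i - t - j).
Proof.
move=> t K1 K2; exists (g K2) => r k r2 mono /andP[t1 tk1] eK1 eK2 n n0n krn F Hsz Hsd.
have kle : forall i j, 1 <= i -> i <= j -> j <= r -> k i <= k j.
  move=> i j i1; elim: j => [|j IH] ij jr.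
    by move: (leq_trans i1 ij).
  rewrite leq_eqVlt in ij; case/orP: ij => [/eqP -> //| ij].
  rewrite ltnS in ij.
  apply: leq_trans (IH ij (ltnW jr)) (mono j _).
  by rewrite (leq_trans i1 ij) jr.
rewrite big_nat_cond [in X in _ <= X]big_nat_cond.
apply: leq_prod => i /andP[/andP[i1 ir] _].
rewrite ltnS in ir.
have hi : k i <= K2 by rewrite -eK2; apply: kle.
have ti : 1 <= t <= k i by rewrite t1 (leq_trans tk1 (kle 1 i _ _ _)).
have := @single _ (F i) t (k i) K2 ti hi.
rewrite card_ord; apply => //.
  by move=> A; apply: Hsz; rewrite i1 ir.
move=> A B AF BF h; rewrite -(minnn (k i)); apply: (Hsd i i) => //; by rewrite i1 ir.
Qed.
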